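(* Let $A$ be a Banach algebra, let $X$ be a commutative Banach algebra which is also a Banach $A$-bimodule and satisfies $\bigcap_{\varphi\in\Delta(X)}\ker\varphi=\{0\}$, let $\psi:A\to X$ be a continuous algebra homomorphism, and let $D:A\to X$ be a bounded linear operator. Then the following are equivalent: (i) $D$ is a $\psi$-derivation, i.e. $D(ab)=D(a)\psi(b)+\psi(a)D(b)$ for all $a,b\in A$ (products taken in $X$); (ii) for every $\varphi\in\Delta(X)$, $\varphi\circ D$ is a $\varphi\circ\psi$-derivation, i.e. $(\varphi\circ D)(ab)=(\varphi\circ D)(a)\,(\varphi\circ\psi)(b)+(\varphi\circ\psi)(a)\,(\varphi\circ D)(b)$ for all $a,b\in A$; (iii) for every $\varphi\in\Delta(X)$, $\varphi\circ D$ is a $(\varphi,\psi)$-point derivation on $A$, i.e. $(\varphi\circ D)(ab)=\varphi(\psi(a))\,(\varphi\circ D)(b)+\varphi(\psi(b))\,(\varphi\circ D)(a)$ for all $a,b\in A$.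
   Context: $\Delta(X)$ denotes the set of all nonzero multiplicative linear functionals on the Banach algebra $X$. The condition $\bigcap_{\varphi\in\Delta(X)}\ker\varphi=\{0\}$ is the paper's notion of semisimplicity. *)

(* Defs.v *)
From mathcomp Require Import all_boot all_order all_algebra.
From mathcomp Require Import all_classical all_reals all_analysis.
From mathcomp Require Export complex.
Set Implicit Arguments.
Unset Strict Implicit.
Unset Printing Implicit Defensive.
Import Order.TTheory GRing.Theory Num.Theory.
Import numFieldNormedType.Exports.
Local Open Scope ring_scope.
Local Open Scope classical_set_scope.

Definition is_algebra_mul (K : numFieldType) (A : lmodType K)
    (mul : A -> A -> A) : Prop :=
  [/\ associative mul,
      (forall x y z, mul (x + y) z = mul x z + mul y z),
      (forall x y z, mul x (y + z) = mul x y + mul x z),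
      (forall (c : K) x y, mul (c *: x) y = c *: mul x y) &
      (forall (c : K) x y, mul x (c *: y) = c *: mul x y)].

Definition banach_algebra (K : numFieldType) (A : completeNormedModType K)
    (mul : A -> A -> A) : Prop :=
  is_algebra_mul mul /\ (forall a b, `|mul a b| <= `|a| * `|b|).

Definition commutative_banach_algebra (K : numFieldType)
    (X : completeNormedModType K) (mul : X -> X -> X) : Prop :=
  banach_algebra mul /\ commutative mul.

Definition banach_bimodule (K : numFieldType) (A : completeNormedModType K)
    (mulA : A -> A -> A) (X : completeNormedModType K)
    (lact : A -> X -> X) (ract : X -> A -> X) : Prop :=
  ((forall a b x, lact (a + b) x = lact a x + lact b x) /\
   (forall a x y, lact a (x + y) = lact a x + lact a y) /\
   (forall (c : K) a x, lact (c *: a) x = c *: lact a x /\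
                        lact a (c *: x) = c *: lact a x)) /\
  ((forall a x y, ract (x + y) a = ract x a + ract y a) /\
   (forall a b x, ract x (a + b) = ract x a + ract x b) /\
   (forall (c : K) a x, ract (c *: x) a = c *: ract x a /\
                        ract x (c *: a) = c *: ract x a)) /\
  ((forall a b x, lact a (lact b x) = lact (mulA a b) x) /\
   (forall a b x, ract (ract x a) b = ract x (mulA a b)) /\
   (forall a b x, ract (lact a x) b = lact a (ract x b))) /\
  (exists C : K, forall a x,
      `|lact a x| <= C * `|a| * `|x| /\ `|ract x a| <= C * `|a| * `|x|).

Definition mult_lin_functional (K : numFieldType) (X : lmodType K)
    (mul : X -> X -> X) (phi : X -> K) : Prop :=
  [/\ (forall x y, phi (x + y) = phi x + phi y),
      (forall (c : K) x, phi (c *: x) = c * phi x),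
      (forall x y, phi (mul x y) = phi x * phi y) &
      exists x, phi x != 0].

Definition Delta (K : numFieldType) (X : lmodType K) (mul : X -> X -> X)
  : set (X -> K) := [set phi | mult_lin_functional mul phi].

Definition semisimple (K : numFieldType) (X : lmodType K)
    (mul : X -> X -> X) : Prop :=
  \bigcap_(phi in Delta mul) (phi @^-1` [set 0]) = [set 0].

Definition algebra_hom (K : numFieldType) (A X : lmodType K)
    (mulA : A -> A -> A) (mulX : X -> X -> X) (psi : A -> X) : Prop :=
  linear psi /\ (forall a b, psi (mulA a b) = mulX (psi a) (psi b)).

Definition bounded_linear (K : numFieldType) (A X : normedModType K)
    (D : A -> X) : Prop :=
  linear D /\ exists M : K, forall a, `|D a| <= M * `|a|.

Definition psi_derivation (A : Type) (Y : zmodType) (mulA : A -> A -> A)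
    (mulY : Y -> Y -> Y) (psi D : A -> Y) : Prop :=
  forall a b, D (mulA a b) = mulY (D a) (psi b) + mulY (psi a) (D b).

Definition point_derivation (K : numFieldType) (A X : Type)
    (mulA : A -> A -> A) (phi : X -> K) (psi : A -> X) (d : A -> K) : Prop :=
  forall a b, d (mulA a b) = phi (psi a) * d b + phi (psi b) * d a.

(* Main.v *)
Require Import Defs.
From mathcomp Require Import all_boot all_order all_algebra.
From mathcomp Require Import all_classical all_reals all_analysis.
From mathcomp Require Import complex.
Import Order.TTheory GRing.Theory Num.Theory.
Import numFieldNormedType.Exports.
Local Open Scope ring_scope.
Local Open Scope complex_scope.

Theorem theorem2p14 (R : realType)
    (A : completeNormedModType R[i]) (mulA : A -> A -> A)
    (X : completeNormedModType R[i]) (mulX : X -> X -> X)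
    (lact : A -> X -> X) (ract : X -> A -> X)
    (psi D : A -> X) :
  banach_algebra mulA ->
  commutative_banach_algebra mulX ->
  banach_bimodule mulA lact ract ->
  semisimple mulX ->
  algebra_hom mulA mulX psi -> continuous psi ->
  bounded_linear D ->
  [<-> psi_derivation mulA mulX psi D;
       forall phi, Delta mulX phi ->
         psi_derivation mulA (@GRing.mul R[i]) (phi \o psi) (phi \o D);
       forall phi, Delta mulX phi ->
         point_derivation mulA phi psi (phi \o D)].
Proof.
move=> _ _ _ Hss _ _ _.
tfae.
- move=> H phi [Hadd Hsc Hmul _] a b /=.
  by rewrite H Hadd !Hmul.
- move=> H phi Hphi a b; have := H phi Hphi a b; rewrite /= => ->.
  by rewrite addrC [phi (psi b) * _]mulrC.
- move=> H a b.
  set z := D (mulA a b) - (mulX (D a) (psi b) + mulX (psi a) (D b)).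
  suff : z = 0 by move/eqP; rewrite subr_eq0 => /eqP.
  have : (\bigcap_(phi in Delta mulX) (phi @^-1` [set 0]))%classic z.
    move=> phi /= Hphi; case: (Hphi) => Hadd Hsc Hmul _.
    rewrite /z -scaleN1r Hadd Hsc Hadd !Hmul.
    have := H phi Hphi a b; rewrite /= => ->.
    by rewrite mulN1r (mulrC (phi (psi b)) (phi (D a))) (addrC (phi (psi a) * phi (D b))) subrr.
  by rewrite Hss.
Qed.
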